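(* Let $M\ge1$ and consider a memoryless channel with binary input $\{0,1\}$, output alphabet $\mathcal{Y}=\{-M,\dots,M\}$ and transition probabilities $\varepsilon_{y|x}$ satisfying $\varepsilon_{y|1}=\varepsilon_{-y|0}$ for all $y$. Let $\mathcal{C}\subseteq\{0,1\}^n$ be a binary linear code with minimum distance $d_{\min}$ and weight distribution $S_w$, used with maximum-likelihood decoding. Let $\mathbf{m}=(m_{-M+1},\dots,m_M)\in\mathbb{Z}_+^{2M}$. Then the decoding error probability satisfies $$P_e\le\sum_{\boldsymbol{\ell}\in\tilde{\mathcal{U}}_n(\mathbf{m})}\Big(\prod_{j=-M}^M\varepsilon_{j|0}^{\ell_j}\Big)\min\Bigg\{\sum_{w=d_{\min}}^n S_w\sum_{\substack{\boldsymbol{\mu}\in\mathcal{U}_w(\boldsymbol{\ell})\\ \sum_j\mu_j\mathrm{LLR}_j\le0}}\binom{w}{\mu_{-M},\dots,\mu_M}\binom{n-w}{\ell_{-M}-\mu_{-M},\dots,\ell_M-\mu_M},\ \binom{n}{\ell_{-M},\dots,\ell_M}\Bigg\}+\sum_{\substack{\boldsymbol{\ell}\in\mathbb{Z}_+^{2M+1},\ \sum_j\ell_j=n\\ \boldsymbol{\ell}\notin\tilde{\mathcal{U}}_n(\mathbf{m})}}\Big(\prod_{j=-M}^M\varepsilon_{j|0}^{\ell_j}\Big)\binom{n}{\ell_{-M},\dots,\ell_M}.$$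
   Context: $\mathbb{Z}_+$ denotes the nonnegative integers; $S_w$ is the number of codewords of Hamming weight $w$; $\binom{m}{a_1,\dots,a_k}=m!/(a_1!\cdots a_k!)$. $\tilde{\mathcal{U}}_n(\mathbf{m})=\{\boldsymbol{\ell}=(\ell_{-M},\dots,\ell_M)\in\mathbb{Z}_+^{2M+1}:\ \sum_j\ell_j=n,\ \ell_j\le m_j\ \text{for } j=-M+1,\dots,M\}$ (no constraint on $\ell_{-M}$). For $\boldsymbol{\ell}$ with $\sum_j\ell_j=n$, $\mathcal{U}_w(\boldsymbol{\ell})=\{\boldsymbol{\mu}\in\mathbb{Z}_+^{2M+1}:\ \sum_j\mu_j=w,\ \mu_j\le\ell_j\ \forall j\}$. $\mathrm{LLR}_j=\log(\varepsilon_{j|0}/\varepsilon_{j|1})$, and $\sum_j\mu_j\mathrm{LLR}_j\le0$ means $\prod_j(\varepsilon_{j|0}/\varepsilon_{j|1})^{\mu_j}\le1$. The error probability is the probability that the decoder does not output the transmitted codeword, with likelihood ties counted as errors; by linearity and symmetry it does not depend on the transmitted codeword. *)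

(* Defs.v *)
From mathcomp Require Import all_boot all_order all_algebra.
Set Implicit Arguments. Unset Strict Implicit. Unset Printing Implicit Defensive.
Import Order.TTheory GRing.Theory Num.Theory.

(* Output alphabet {-M,...,M}: ordinal i : 'I_(2M+1) encodes the symbol i - M. *)
Notation outY M := ('I_(2 * M).+1).

Definition sym (M : nat) (i : outY M) : int := (i : nat)%:Z - (M : nat)%:Z.

Definition wt (n : nat) (c : 'rV['F_2]_n) : nat := #|[set i : 'I_n | c ord0 i != 0%R]|.

Definition S (n : nat) (C : {vspace 'rV['F_2]_n}) (w : nat) : nat :=
  #|[set c : 'rV['F_2]_n | (c \in C) && (wt c == w)]|.

(* Minimum distance = minimum weight of a nonzero codeword
   (convention: n+1 for the trivial code {0}; then the sum over w is empty). *)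
Definition dmin (n : nat) (C : {vspace 'rV['F_2]_n}) : nat :=
  \big[minn/n.+1]_(c : 'rV['F_2]_n | (c \in C) && (c != 0%R)) wt c.

Definition multinom (T : finType) (m : nat) (a : T -> nat) : nat :=
  m`! %/ \prod_(t : T) (a t)`!.

Local Open Scope ring_scope.

Definition lik (R : realFieldType) (M n : nat) (eps : bool -> outY M -> R)
  (c : 'rV['F_2]_n) (y : {ffun 'I_n -> outY M}) : R :=
  \prod_(i < n) eps (c ord0 i != 0) (y i).

(* ML decoding error probability when c is transmitted, ties counted as errors:
   the decoder errs iff some other codeword c' has P(y|c') >= P(y|c). *)
Definition Perr (R : realFieldType) (M n : nat) (eps : bool -> outY M -> R)
  (C : {vspace 'rV['F_2]_n}) (c : 'rV['F_2]_n) : R :=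
  \sum_(y : {ffun 'I_n -> outY M} |
        [exists c' : 'rV['F_2]_n, [&& c' \in C, c' != c & lik eps c y <= lik eps c' y]])
    lik eps c y.

Definition ptype (R : realFieldType) (M : nat) (eps : bool -> outY M -> R)
  (l : outY M -> nat) : R := \prod_(j : outY M) eps false j ^+ l j.

(* sum_j mu_j LLR_j <= 0, written as prod_j (eps_{j|0}/eps_{j|1})^{mu_j} <= 1. *)
Definition llr_nonpos (R : realFieldType) (M : nat) (eps : bool -> outY M -> R)
  (mu : outY M -> nat) : bool :=
  \prod_(j : outY M) (eps false j / eps true j) ^+ mu j <= 1.

(* l in U~_n(m): sum l = n and l_j <= m_j for j = -M+1..M (ordinals 1..2M). *)
Definition inUt (M n : nat) (m : 'I_(2 * M) -> nat) (l : {ffun outY M -> 'I_n.+1}) : bool :=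
  ((\sum_(j : outY M) (l j : nat))%N == n) &&
  [forall i : 'I_(2 * M), (l (lift ord0 i) : nat) <= m i]%N.

Definition ubterm (R : realFieldType) (M n : nat) (eps : bool -> outY M -> R)
  (C : {vspace 'rV['F_2]_n}) (l : {ffun outY M -> 'I_n.+1}) : R :=
  \sum_(dmin C <= w < n.+1)
    (S C w)%:R *
    \sum_(mu : {ffun outY M -> 'I_n.+1} |
          [&& ((\sum_(j : outY M) (mu j : nat))%N == w),
              [forall j, (mu j : nat) <= l j]%N &
              llr_nonpos eps (fun j => (mu j : nat))])
      ((multinom w (fun j => (mu j : nat))) *
       (multinom (n - w) (fun j => (l j : nat) - mu j)))%N%:R.

Definition bound (R : realFieldType) (M n : nat) (eps : bool -> outY M -> R)
  (C : {vspace 'rV['F_2]_n}) (m : 'I_(2 * M) -> nat) : R :=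
  \sum_(l : {ffun outY M -> 'I_n.+1} | inUt m l)
     ptype eps (fun j => (l j : nat)) *
     Num.min (ubterm eps C l) (multinom n (fun j => (l j : nat)))%:R
  + \sum_(l : {ffun outY M -> 'I_n.+1} |
          ((\sum_(j : outY M) (l j : nat))%N == n) && ~~ inUt m l)
     ptype eps (fun j => (l j : nat)) * (multinom n (fun j => (l j : nat)))%:R.

(* Main.v *)
Require Import Defs.
From mathcomp Require Import all_boot all_order all_algebra.
Set Implicit Arguments. Unset Strict Implicit. Unset Printing Implicit Defensive.
From mathcomp Require Import zify.

Definition cnt (I T : finType) (A : {set I}) (y : {ffun I -> T}) (j : T) : nat :=
  \sum_(i in A) (y i == j).
Definition Sset (I T : finType) (t0 : T) (A : {set I}) (a : T -> nat) : {set {ffun I -> T}} :=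
  [set y | [forall j, cnt A y j == a j] && [forall i, (i \notin A) ==> (y i == t0)]].

Lemma sum_ind (T : finType) (t : T) : \sum_(j : T) (t == j) = 1%N.
Proof.
rewrite (bigD1 t) //= eqxx big1 // => j /negPf; rewrite eq_sym => ->; done.
Qed.

Lemma cnt_sum (I T : finType) (A : {set I}) y : \sum_(j : T) cnt A y j = #|A|.
Proof.
rewrite /cnt exchange_big /= -sum1_card; apply: eq_bigr => i _; exact: sum_ind.
Qed.

Lemma cnt_D1 (I T : finType) (A : {set I}) x y (j : T) : x \in A ->
  cnt A y j = cnt (A :\ x) y j + (y x == j).
Proof.
move=> xA; rewrite /cnt (bigD1 x) //= addnC; congr (_ + _).
by apply: eq_bigl => i; rewrite !inE andbC.
Qed.

Lemma prod_fact_D1 (T : finType) (a : T -> nat) j : (0 < a j)%N ->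
  (\prod_t (a t)`! = a j * \prod_t (a t - (t == j))`!)%N.
Proof.
move=> aj; rewrite (bigD1 j) //= [X in (_ = _ * X)%N](bigD1 j) //= eqxx.
rewrite mulnA; congr (_ * _)%N.
  by case: (a j) aj => // m _; rewrite factS subn1.
by apply: eq_bigr => t /negPf ->; rewrite subn0.
Qed.

Lemma countG (I T : finType) (t0 : T) (k : nat) : forall (A : {set I}) (a : T -> nat),
  #|A| = k -> (#|Sset t0 A a| * \prod_j (a j)`! <= k`!)%N.
Proof.
elim: k => [|k IH] A a hA.
  have A0 : A = set0.
    by apply/eqP; rewrite -cards_eq0 hA.
  case: (eqVneq (Sset t0 A a) set0) => [->|/set0Pn [y0 Hy0]].
    by rewrite cards0.
  have a0 : forall j, a j = 0%N.
    move=> j; move: Hy0; rewrite inE => /andP [/forallP /(_ j) /eqP <- _].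
    by rewrite /cnt A0 big_set0.
  rewrite big1 ?muln1; last by move=> j _; rewrite a0.
  have -> : Sset t0 A a = [set [ffun=> t0]].
    apply/eqP; rewrite eqEcard cards1 (cardD1 y0) Hy0 /= andbT.
    apply/subsetP => y; rewrite inE => /andP [_ /forallP Hy].
    rewrite inE; apply/eqP/ffunP => i; rewrite ffunE.
    by move: (Hy i); rewrite A0 inE /= => /eqP.
  by rewrite cards1.
case: (eqVneq (Sset t0 A a) set0) => [->|/set0Pn [y0 Hy0]].
  by rewrite cards0.
have suma : (\sum_j a j = k.+1)%N.
  rewrite -hA -(cnt_sum A y0); apply: eq_bigr => j _.
  by move: Hy0; rewrite inE => /andP [/forallP /(_ j) /eqP -> _].
have [x xA] : exists x, x \in A.
  by apply/set0Pn; rewrite -card_gt0 hA.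
set S := Sset t0 A a.
have -> : #|S| = (\sum_j \sum_(y in S | y x == j) 1)%N.
  by rewrite -sum1_card (partition_big (fun y : {ffun I -> T} => y x) predT).
rewrite big_distrl /= factS -suma big_distrl /=.
apply: leq_sum => j _.
have Tj : (\sum_(y in S | y x == j) 1 <= #|Sset t0 (A :\ x) (fun t => a t - (t == j))|)%N.
  rewrite sum1dep_card.
  pose f := fun y : {ffun I -> T} => [ffun i => if i == x then t0 else y i].
  rewrite -(@card_in_imset _ _ f); last first.
    move=> y1 y2; rewrite !inE => /andP [_ /eqP h1] /andP [_ /eqP h2] hf.
    apply/ffunP => i; case: (eqVneq i x) => [->|ne]; first by rewrite h1 h2.
    by move/ffunP: hf => /(_ i); rewrite /f !ffunE (negPf ne).
  apply: subset_leq_card; apply/subsetP => z /imsetP [y]; rewrite !inE.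
  move=> /andP [/andP [/forallP Hc /forallP Ho] /eqP yx] ->.
  apply/andP; split.
    apply/forallP => t; move: (Hc t); rewrite (cnt_D1 _ _ xA) => /eqP <-.
    rewrite yx [j == t]eq_sym addnK /cnt; apply/eqP/eq_bigr => i; rewrite !inE.
    by rewrite /f ffunE => /andP [/negPf -> _].
  apply/forallP => i; rewrite /f ffunE !inE negb_and negbK.
  case: (eqVneq i x) => [->|ne] /=; first by rewrite eqxx.
  exact: (Ho i).
case: (posnP (a j)) => [aj0|ajp].
  rewrite aj0 !mul0n leqn0 muln_eq0; apply/orP; left.
  rewrite sum1dep_card cards_eq0; apply/eqP/setP => y; rewrite !inE.
  apply/negP => /andP [/andP [/forallP /(_ j) /eqP Hc _] /eqP yx].
  by move: Hc; rewrite (cnt_D1 _ _ xA) yx eqxx aj0 addn1.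
rewrite (prod_fact_D1 ajp) mulnCA leq_mul2l.
apply/orP; right; apply: leq_trans (IH (A :\ x) (fun t => a t - (t == j)) _); first by rewrite leq_mul2r Tj orbT.
by rewrite (cardsD1 x) xA in hA; case: hA.
Qed.
Import Order.TTheory GRing.Theory Num.Theory.

Lemma cnt_card (I T : finType) (A : {set I}) (y : {ffun I -> T}) j :
  cnt A y j = #|[pred i | (i \in A) && (y i == j)]|.
Proof.
rewrite /cnt -sum1_card big_mkcond /= [RHS]big_mkcond /=.
by apply: eq_bigr => i _; rewrite !inE; case: (i \in A); case: (y i == j).
Qed.

Lemma prod_group (R : comPzSemiRingType) (I T : finType) (A : {set I}) (y : {ffun I -> T}) (F : T -> R) :
  (\prod_(i in A) F (y i) = \prod_j F j ^+ cnt A y j)%R.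
Proof.
rewrite (partition_big y predT) //=; apply: eq_bigr => j _.
rewrite cnt_card -prodr_const; apply: eq_big => i; first by rewrite !inE.
by move=> /andP [_ /eqP ->].
Qed.

Lemma cnt_le (I T : finType) (A : {set I}) (y : {ffun I -> T}) j : (cnt A y j <= #|I|)%N.
Proof.
rewrite cnt_card; exact: max_card.
Qed.

Lemma cnt_split (I T : finType) (W : {set I}) (y : {ffun I -> T}) j :
  cnt setT y j = (cnt W y j + cnt (~: W) y j)%N.
Proof.
rewrite /cnt (bigID (mem W)) /=; congr (_ + _)%N; apply: eq_bigl => i; by rewrite !inE.
Qed.

Lemma cnt_sub (I T : finType) (W : {set I}) (y : {ffun I -> T}) j :
  (cnt W y j <= cnt setT y j)%N.
Proof. by rewrite (cnt_split W); apply: leq_addr. Qed.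

Lemma count2 (I T : finType) (t0 : T) (W : {set I}) (l mu : T -> nat) :
  (#|[set y : {ffun I -> T} | [forall j, cnt setT y j == l j] && [forall j, cnt W y j == mu j]]|
   <= #|Sset t0 W mu| * #|Sset t0 (~: W) (fun j => l j - mu j)|)%N.
Proof.
pose f := fun y : {ffun I -> T} =>
  ([ffun i => if i \in W then y i else t0], [ffun i => if i \in W then t0 else y i]).
have finj : injective f.
  move=> y1 y2 [h1 h2]; apply/ffunP => i.
  move/ffunP: h1 => /(_ i); move/ffunP: h2 => /(_ i); rewrite !ffunE.
  by case: (i \in W).
rewrite -cardsX -(card_imset _ finj); apply: subset_leq_card.
apply/subsetP => z /imsetP [y]; rewrite !inE => /andP [/forallP Hl /forallP Hm] ->.
rewrite /f /=; apply/and3P; split; first (apply/andP; split).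
- apply/forallP => j; rewrite -(eqP (Hm j)) /cnt; apply/eqP/eq_bigr => i iW.
  by rewrite ffunE iW.
- apply/forallP => i; rewrite ffunE; case: ifP => [iW|_] //; by rewrite eqxx implybT.
- apply/forallP => j; rewrite -(eqP (Hm j)) -(eqP (Hl j)) (cnt_split W) addKn.
  rewrite /cnt; apply/eqP/eq_bigr => i; rewrite inE => /negPf iW.
  by rewrite ffunE iW.
- apply/forallP => i; rewrite ffunE !inE negbK; case: ifP => // _; by rewrite eqxx implybT.
Qed.
Local Open Scope ring_scope.
Lemma F2_cases (a : 'F_2) : a = 0 \/ a = 1.
Proof.
case: a => [[|[|k]] Hk].
- by left; apply/val_inj.
- by right; apply/val_inj.
- by [].
Qed.
Lemma bitB (a b : 'F_2) : b != 0 -> (a - b != 0) = ~~ (a != 0).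
Proof.
case: (F2_cases b) => ->; rewrite ?eqxx // => _.
case: (F2_cases a) => ->; first by rewrite sub0r oppr_eq0 oner_eq0 eqxx.
by rewrite subrr eqxx oner_eq0.
Qed.

Definition ty (n : nat) (T : finType) (A : {set 'I_n}) (z : {ffun 'I_n -> T}) : {ffun T -> 'I_n.+1} :=
  [ffun j => inord (cnt A z j)].

Lemma tyE (n : nat) (T : finType) (A : {set 'I_n}) (z : {ffun 'I_n -> T}) j :
  (ty A z j : nat) = cnt A z j.
Proof.
by rewrite ffunE inordK // ltnS (leq_trans (cnt_le _ _ _)) ?card_ord.
Qed.

Lemma multinom_bound (I T : finType) (t0 : T) (A : {set I}) (a : T -> nat) :
  (#|Sset t0 A a| <= multinom #|A| a)%N.
Proof.
rewrite /multinom leq_divRL; first exact: countG.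
by rewrite prodn_gt0 // => j; rewrite fact_gt0.
Qed.

Lemma dmin_le (n : nat) (C : {vspace 'rV['F_2]_n}) c :
  c \in C -> c != 0 -> (dmin C <= wt c)%N.
Proof.
move=> cC c0; rewrite /dmin.
have : c \in index_enum 'rV['F_2]_n by rewrite mem_index_enum.
elim: (index_enum _) => [//|x r IH]; rewrite inE big_cons.
case/orP => [/eqP <-|cr]; first by rewrite cC c0 /= geq_minl.
case: ifP => _; last exact: IH.
by rewrite geq_min IH // orbT.
Qed.

Lemma wt_le (n : nat) (c : 'rV['F_2]_n) : (wt c <= n)%N.
Proof. by rewrite /wt (leq_trans (max_card _)) ?card_ord. Qed.

Lemma sym_rev (M : nat) (y : outY M) : sym (rev_ord y) = - sym y.
Proof.
rewrite /sym /=; have := ltn_ord y; rewrite ltnS => hy.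
rewrite subSS; lia.
Qed.

Lemma eps_flip (R : realFieldType) (M : nat) (eps : bool -> outY M -> R)
  (eps_sym : forall y y' : outY M, sym y' = - sym y -> eps true y = eps false y') b y :
  eps b y = eps (~~ b) (rev_ord y).
Proof.
case: b => /=; first by apply: eps_sym; rewrite sym_rev.
by rewrite (eps_sym (rev_ord y) y) // sym_rev opprK.
Qed.

Definition flipc (M n : nat) (c : 'rV['F_2]_n) (y : {ffun 'I_n -> outY M}) : {ffun 'I_n -> outY M} :=
  [ffun i => if c ord0 i != 0 then rev_ord (y i) else y i].

Lemma flipcK (M n : nat) (c : 'rV['F_2]_n) : involutive (@flipc M n c).
Proof.
move=> y; apply/ffunP => i; rewrite !ffunE; by case: (c ord0 i != 0); rewrite ?rev_ordK.
Qed.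

Lemma lik_flip (R : realFieldType) (M n : nat) (eps : bool -> outY M -> R)
  (eps_sym : forall y y' : outY M, sym y' = - sym y -> eps true y = eps false y')
  (c c' : 'rV['F_2]_n) y :
  lik eps c' y = lik eps (c' - c) (flipc c y).
Proof.
rewrite /lik; apply: eq_bigr => i _; rewrite /flipc ffunE !mxE.
case: (eqVneq (c ord0 i) 0) => [->|ne]; first by rewrite subr0.
by rewrite (bitB _ ne) -eps_flip.
Qed.

Lemma Perr_shift (R : realFieldType) (M n : nat) (eps : bool -> outY M -> R)
  (eps_sym : forall y y' : outY M, sym y' = - sym y -> eps true y = eps false y')
  (C : {vspace 'rV['F_2]_n}) c : c \in C -> Perr eps C c = Perr eps C 0.
Proof.
move=> hc; rewrite /Perr (reindex_inj (can_inj (flipcK c))) /=.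
apply: eq_big => z.
  rewrite (lik_flip eps_sym c c) subrr flipcK.
  apply/existsP/existsP => [[c' /and3P [c'C ne le]]|[c'' /and3P [c''C ne le]]].
    exists (c' - c); rewrite memvB //= subr_eq0 ne /=.
    by rewrite (lik_flip eps_sym c c') flipcK in le.
  exists (c'' + c); rewrite memvD //= -subr_eq0 addrK ne /=.
  by rewrite (lik_flip eps_sym c (c'' + c)) flipcK addrK.
by rewrite (lik_flip eps_sym c c) subrr flipcK.
Qed.

Lemma lik0 (R : realFieldType) (M n : nat) (eps : bool -> outY M -> R) z :
  lik eps (0 : 'rV['F_2]_n) z = \prod_i eps false (z i).
Proof. by rewrite /lik; apply: eq_bigr => i _; rewrite mxE eqxx. Qed.

Lemma lik_ptype (R : realFieldType) (M n : nat) (eps : bool -> outY M -> R) z l :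
  ty setT z = l -> lik eps (0 : 'rV['F_2]_n) z = ptype eps (fun j => (l j : nat)).
Proof.
move=> <-; rewrite lik0 /ptype.
rewrite (eq_bigl (fun i => i \in [set: 'I_n])); last by move=> i; rewrite inE.
rewrite prod_group; apply: eq_bigr => j _; by rewrite tyE.
Qed.

Lemma prod_splitW (R : realFieldType) (n : nat) (W : {set 'I_n}) (F : 'I_n -> R) :
  \prod_i F i = (\prod_(i in W) F i) * \prod_(i in ~: W) F i.
Proof.
rewrite (bigID (mem W)) /=; congr (_ * _); apply: eq_bigl => i; by rewrite !inE.
Qed.

Lemma llr_lemma (R : realFieldType) (M n : nat) (eps : bool -> outY M -> R)
  (eps_ge0 : forall x y, 0 <= eps x y) (c' : 'rV['F_2]_n) z :
  lik eps 0 z != 0 -> lik eps 0 z <= lik eps c' z ->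
  llr_nonpos eps (fun j => (ty [set i | c' ord0 i != 0] z j : nat)).
Proof.
set W := [set i | c' ord0 i != 0].
rewrite lik0 /lik (prod_splitW W) (prod_splitW W (fun i => eps (c' ord0 i != 0) (z i))).
set P0 := \prod_(i in W) _; set Q := \prod_(i in ~: W) _.
have -> : \prod_(i in W) eps (c' ord0 i != 0) (z i) = \prod_(i in W) eps true (z i).
  by apply: eq_bigr => i; rewrite inE => ->.
have -> : \prod_(i in ~: W) eps (c' ord0 i != 0) (z i) = Q.
  by apply: eq_bigr => i; rewrite !inE => /negPf ->.
set P1 := \prod_(i in W) _.
have P0ge : 0 <= P0 by apply: prodr_ge0 => i _.
have Qge : 0 <= Q by apply: prodr_ge0 => i _.
move=> nz le.
have pos : 0 < P0 * Q by rewrite lt_def nz mulr_ge0.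
have Qpos : 0 < Q by rewrite lt_def Qge andbT; apply: contraTneq pos => ->; rewrite mulr0 ltxx.
have P0pos : 0 < P0 by rewrite lt_def P0ge andbT; apply: contraTneq pos => ->; rewrite mul0r ltxx.
have le' : P0 <= P1 by rewrite -(ler_pM2r Qpos).
have P1pos : 0 < P1 by apply: lt_le_trans le'.
rewrite /llr_nonpos.
have -> : \prod_j (eps false j / eps true j) ^+ (ty W z j : nat) = P0 / P1.
  rewrite (eq_bigr (fun j => (eps false j / eps true j) ^+ cnt W z j)); last by move=> j _; rewrite tyE.
  by rewrite -(prod_group W z (fun j => eps false j / eps true j)) prodf_div.
by rewrite ler_pdivrMr // mul1r.
Qed.

Definition gsum (R : realFieldType) (M n : nat) (eps : bool -> outY M -> R)
  (l : {ffun outY M -> 'I_n.+1}) (w : nat) : nat :=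
  \sum_(mu : {ffun outY M -> 'I_n.+1} |
          [&& ((\sum_(j : outY M) (mu j : nat))%N == w),
              [forall j, (mu j : nat) <= l j]%N &
              llr_nonpos eps (fun j => (mu j : nat))])
      ((multinom w (fun j => (mu j : nat))) *
       (multinom (n - w) (fun j => (l j : nat) - mu j)))%N.

Lemma K_bound (R : realFieldType) (M n : nat) (eps : bool -> outY M -> R)
  (eps_ge0 : forall x y, 0 <= eps x y) (c' : 'rV['F_2]_n) l :
  (#|[set z : {ffun 'I_n -> outY M} | [&& ty setT z == l, lik eps 0%R z != 0%R & (lik eps 0%R z <= lik eps c' z)%R]]|
   <= gsum eps l (wt c'))%N.
Proof.
set W := [set i | c' ord0 i != 0].
have hW : #|W| = wt c' by [].
rewrite -sum1dep_card /gsum.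
rewrite (partition_big (ty W) (fun mu : {ffun outY M -> 'I_n.+1} =>
  [&& ((\sum_(j : outY M) (mu j : nat))%N == wt c'),
              [forall j, (mu j : nat) <= l j]%N &
              llr_nonpos eps (fun j => (mu j : nat))])); last first.
  move=> z /and3P [/eqP tl nz le]; apply/and3P; split.
  - by rewrite -hW -(cnt_sum W z); apply/eqP/eq_bigr => j _; rewrite tyE.
  - by apply/forallP => j; rewrite -tl !tyE cnt_sub.
  - exact: llr_lemma le.
apply: leq_sum => mu _; rewrite sum1dep_card.
apply: leq_trans (leq_trans _ (count2 ord0 W (fun j => (l j : nat)) (fun j => (mu j : nat)))) _.
  apply: subset_leq_card; apply/subsetP => z; rewrite !inE => /andP [/and3P [/eqP tl _ _] /eqP tm].
  apply/andP; split; apply/forallP => j; [by rewrite -tl tyE | by rewrite -tm tyE].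
apply: leq_mul; first by rewrite -hW multinom_bound.
have -> : (n - wt c' = #|~: W|)%N.
  by have := cardsC W; rewrite card_ord -hW; lia.
exact: multinom_bound.
Qed.

Lemma pick_sum (a b k : nat) (G : nat -> nat) : (a <= k)%N -> (k < b)%N ->
  (\sum_(a <= w < b) (k == w) * G w = G k)%N.
Proof.
move=> hak hkb; rewrite (@big_cat_nat _ _ _ k a b _ _ hak (ltnW hkb)) /= [\sum_(k <= i < b) _]big_ltn // eqxx mul1n.
rewrite big1_seq; last first.
  move=> w; rewrite mem_index_iota => /andP [_ /andP [_ hw]].
  by rewrite eq_sym (ltn_eqF hw).
rewrite add0n big1_seq; first exact: addn0.
move=> w; rewrite mem_index_iota => /andP [_ /andP [hw _]].
by rewrite eq_sym (gtn_eqF hw).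
Qed.

Lemma regroup (n : nat) (C : {vspace 'rV['F_2]_n}) (G : nat -> nat) :
  (\sum_(c' | (c' \in C) && (c' != 0%R)) G (wt c') <= \sum_(dmin C <= w < n.+1) S C w * G w)%N.
Proof.
rewrite (eq_bigr (fun c' => \sum_(dmin C <= w < n.+1) (wt c' == w) * G w)%N); last first.
  move=> c' /andP [cC c0]; rewrite pick_sum //; first exact: dmin_le.
  by rewrite ltnS wt_le.
rewrite exchange_big /=; apply: leq_sum => w _.
rewrite -big_distrl /= leq_mul2r; apply/orP; right.
rewrite (eq_bigr (fun c' => if wt c' == w then 1 else 0)%N); last by move=> c' _; case: (wt c' == w).
rewrite -big_mkcondr sum1dep_card /S; apply: subset_leq_card; apply/subsetP => c'.
by rewrite !inE => /andP [/andP [-> _] ->].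
Qed.

Definition Nset (R : realFieldType) (M n : nat) (eps : bool -> outY M -> R) (C : {vspace 'rV['F_2]_n})
  (l : {ffun outY M -> 'I_n.+1}) : {set {ffun 'I_n -> outY M}} :=
  [set z : {ffun 'I_n -> outY M} |
      ([exists c' : 'rV['F_2]_n, [&& c' \in C, c' != 0 & lik eps 0 z <= lik eps c' z]]
        && (lik eps 0 z != 0)) && (ty setT z == l)].

Lemma N_ub (R : realFieldType) (M n : nat) (eps : bool -> outY M -> R)
  (eps_ge0 : forall x y, 0 <= eps x y) (C : {vspace 'rV['F_2]_n}) l :
  (#|Nset eps C l|)%:R <= ubterm eps C l.
Proof.
set Kset := fun c' : 'rV['F_2]_n => [set z : {ffun 'I_n -> outY M} | [&& ty setT z == l, lik eps 0%R z != 0%R & (lik eps 0%R z <= lik eps c' z)%R]].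
have h1 : (#|Nset eps C l|
   <= \sum_(c' | (c' \in C) && (c' != 0%R)) #|Kset c'|)%N.
  rewrite /Nset -sum1dep_card.
  apply: (@leq_trans (\sum_z \sum_(c' | (c' \in C) && (c' != 0%R)) (z \in Kset c'))%N).
    rewrite big_mkcond /=; apply: leq_sum => z _; case: ifP => // /andP [/andP [/existsP [c' /and3P [cC c0 le]] nz] tl].
    rewrite (bigD1 c') /=; last by rewrite cC c0.
    by rewrite inE tl nz le.
  rewrite exchange_big /=; apply: leq_sum => c' _.
  rewrite -sum1_card; apply: eq_leq; rewrite [RHS]big_mkcond; apply: eq_bigr => z _; by case: (z \in Kset c').
have h2 : (\sum_(c' | (c' \in C) && (c' != 0%R)) #|Kset c'| <=
           \sum_(c' | (c' \in C) && (c' != 0%R)) gsum eps l (wt c'))%N.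
  by apply: leq_sum => c' _; apply: K_bound.
have h3 := regroup C (gsum eps l).
have -> : ubterm eps C l = (\sum_(dmin C <= w < n.+1) S C w * gsum eps l w)%N%:R.
  rewrite /ubterm natr_sum; apply: eq_bigr => w _; by rewrite natrM /gsum natr_sum.
by rewrite ler_nat (leq_trans h1 (leq_trans h2 h3)).
Qed.

Lemma N_multi (R : realFieldType) (M n : nat) (P : pred {ffun 'I_n -> outY M}) (l : {ffun outY M -> 'I_n.+1}) :
  (#|[set z : {ffun 'I_n -> outY M} | P z && (ty setT z == l)]| <= multinom n (fun j => (l j : nat)))%N.
Proof.
apply: leq_trans (_ : #|Sset ord0 setT (fun j => (l j : nat))| <= _)%N.
  apply: subset_leq_card; apply/subsetP => z; rewrite !inE => /andP [_ /eqP tl].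
  apply/andP; split; apply/forallP => j; first by rewrite -tl tyE.
  by rewrite inE.
by have := multinom_bound ord0 [set: 'I_n] (fun j => (l j : nat)); rewrite cardsT card_ord.
Qed.

Lemma ptype_ge0 (R : realFieldType) (M : nat) (eps : bool -> outY M -> R)
  (eps_ge0 : forall x y, 0 <= eps x y) l : 0 <= ptype eps l.
Proof. by apply: prodr_ge0 => j _; apply: exprn_ge0. Qed.

Lemma main0 (R : realFieldType) (M n : nat) (eps : bool -> outY M -> R)
  (eps_ge0 : forall x y, 0 <= eps x y) (C : {vspace 'rV['F_2]_n}) (m : 'I_(2 * M) -> nat) :
  Perr eps C 0 <= bound eps C m.
Proof.
rewrite /Perr (bigID (fun z => lik eps 0 z != 0)) /= [X in _ + X]big1 ?addr0; last first.
  by move=> z /andP [_ /negPn /eqP].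
rewrite (partition_big (@ty n _ setT) (fun l : {ffun outY M -> 'I_n.+1} => (\sum_j (l j : nat))%N == n)) /=; last first.
  move=> z _; apply/eqP; rewrite (eq_bigr (fun j => cnt setT z j)); last by move=> j _; rewrite tyE.
  by rewrite cnt_sum cardsT card_ord.
set N := fun l : {ffun outY M -> 'I_n.+1} => #|Nset eps C l|.
rewrite (eq_bigr (fun l : {ffun outY M -> 'I_n.+1} => ptype eps (fun j => (l j : nat)) * (N l)%:R)); last first.
  move=> l _; rewrite /N -sum1dep_card natr_sum mulr_sumr; apply: eq_bigr => z /andP [_ /eqP tl].
  by rewrite mulr1n mulr1 (lik_ptype _ tl).
rewrite (bigID (inUt m)) /=; apply: lerD.
  rewrite (eq_bigl (inUt m)); last by move=> l; rewrite /inUt; case: (_ == n).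
  apply: ler_sum => l _; apply: ler_wpM2l; first exact: ptype_ge0.
  rewrite le_min; apply/andP; split; first exact: N_ub.
  by rewrite ler_nat N_multi.
apply: ler_sum => l _; apply: ler_wpM2l; first exact: ptype_ge0.
by rewrite ler_nat N_multi.
Qed.

Unset Implicit Arguments.
Set Strict Implicit.
Set Printing Implicit Defensive.

Theorem corollary1 (R : realFieldType) (M n : nat) (hM : (1 <= M)%N)
  (eps : bool -> outY M -> R)
  (eps_ge0 : forall x y, 0 <= eps x y)
  (eps_sum1 : forall x, \sum_(y : outY M) eps x y = 1)
  (eps_sym : forall y y' : outY M, sym y' = - sym y -> eps true y = eps false y')
  (C : {vspace 'rV['F_2]_n})
  (m : 'I_(2 * M) -> nat)
  (c : 'rV['F_2]_n) (hc : c \in C) :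
  Perr eps C c <= bound eps C m.
Proof.
by rewrite (Perr_shift eps_sym hc); apply: main0.
Qed.
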